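(* Let $m,q\in\mathbb{Q}\setminus\{0\}$ with $q\neq -1/m$. Then the torsion subgroup of $E_{m,q}(\mathbb{Q})$ contains a subgroup isomorphic to $\mathbb{Z}/2\mathbb{Z}$; explicitly $\bigl(\tfrac13((m^2+1)q^2+2mq+2),0\bigr)\in E_{m,q}(\mathbb{Q})$. Moreover, for every fixed $m\in\mathbb{Q}\setminus\{0\}$ there exist infinitely many $q\in\mathbb{Q}$ (with $q\neq0$, $q\neq-1/m$) such that the torsion subgroup of $E_{m,q}(\mathbb{Q})$ contains a subgroup isomorphic to $\mathbb{Z}/2\mathbb{Z}\times\mathbb{Z}/2\mathbb{Z}$.
   Context: For $m,q$ (rational numbers or indeterminates), $E_{m,q}$ denotes the curve given by the Weierstrass equation $$y^2=x^3-\tfrac13\bigl[(m^2+1)^2q^4+4m(m^2+1)q^3+(5m^2+4)q^2+2mq+1\bigr]x+\tfrac1{27}\bigl[2(m^2+1)^2q^4+8m(m^2+1)q^3+(7m^2+8)q^2-2mq-1\bigr]\bigl[(m^2+1)q^2+2mq+2\bigr].$$ For $m,q\in\mathbb{Q}^\times$ with $q\ne-1/m$ it is an elliptic curve. *)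

(* Defs.v *)
From HB Require Import structures.
From mathcomp Require Import all_boot all_order all_algebra.
Set Implicit Arguments. Unset Strict Implicit. Unset Printing Implicit Defensive.
Import Order.TTheory GRing.Theory Num.Theory.
Local Open Scope ring_scope.

Inductive point : Type := Inf | Aff of rat & rat.

Definition on_curve (a b : rat) (P : point) : bool :=
  match P with
  | Inf => true
  | Aff x y => y ^+ 2 == x ^+ 3 + a * x + b
  end.

Definition padd (a : rat) (P Q : point) : point :=
  match P, Q with
  | Inf, _ => Q
  | _, Inf => P
  | Aff x1 y1, Aff x2 y2 =>
    if x1 == x2 then
      if y1 + y2 == 0 then Inf
      else let l := (3 * x1 ^+ 2 + a) / (2 * y1) in
           let x3 := l ^+ 2 - x1 - x2 in
           Aff x3 (l * (x1 - x3) - y1)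
    else let l := (y2 - y1) / (x2 - x1) in
         let x3 := l ^+ 2 - x1 - x2 in
         Aff x3 (l * (x1 - x3) - y1)
  end.

Definition Ea (m q : rat) : rat :=
  - (1 / 3) * ((m ^+ 2 + 1) ^+ 2 * q ^+ 4 + 4 * m * (m ^+ 2 + 1) * q ^+ 3
               + (5 * m ^+ 2 + 4) * q ^+ 2 + 2 * m * q + 1).

Definition Eb (m q : rat) : rat :=
  (1 / 27) * (2 * (m ^+ 2 + 1) ^+ 2 * q ^+ 4 + 8 * m * (m ^+ 2 + 1) * q ^+ 3
              + (7 * m ^+ 2 + 8) * q ^+ 2 - 2 * m * q - 1)
           * ((m ^+ 2 + 1) * q ^+ 2 + 2 * m * q + 2).

(* E(Q) contains a subgroup isomorphic to Z/2Z (necessarily inside the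
   torsion subgroup): a nonzero rational point P with 2P = O. *)
Definition has_Z2 (a b : rat) : Prop :=
  exists P, [/\ on_curve a b P, P <> Inf & padd a P P = Inf].

(* E(Q) contains a subgroup isomorphic to Z/2Z x Z/2Z: two rational points
   P, Q with P, Q, P+Q nonzero and 2P = 2Q = O; then {O,P,Q,P+Q} is such a
   subgroup (of the torsion subgroup). *)
Definition has_Z2xZ2 (a b : rat) : Prop :=
  exists P Q, [/\ on_curve a b P, on_curve a b Q,
    [/\ P <> Inf, Q <> Inf & padd a P Q <> Inf] &
    padd a P P = Inf /\ padd a Q Q = Inf].

(* Main.v *)
Require Import Defs.
From HB Require Import structures.
From mathcomp Require Import all_boot all_order all_algebra.
From mathcomp Require Import ring lra.
Import Order.TTheory GRing.Theory Num.Theory.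
Local Open Scope ring_scope.

Lemma e1_on m q : on_curve (Ea m q) (Eb m q)
       (Aff ((1 / 3) * ((m ^+ 2 + 1) * q ^+ 2 + 2 * m * q + 2)) 0).
Proof. rewrite /= /Ea /Eb; apply/eqP; field. all: by []. Qed.

Definition qq m t : rat := (t - 1/t - 2 * m)/(m^+2+1).
Definition ee1 m q : rat := (1 / 3) * ((m ^+ 2 + 1) * q ^+ 2 + 2 * m * q + 2).
Definition ee m t (sg : rat) := (- ee1 m (qq m t) + sg * qq m t * (t + 1/t))/2.

Lemma e23_on m t (sg : rat) : sg = 1 \/ sg = -1 -> m ^+ 2 + 1 != 0 -> t != 0 ->
  on_curve (Ea m (qq m t)) (Eb m (qq m t)) (Aff (ee m t sg) 0).
Proof. move=> [->|->] hm ht; rewrite /= /Ea /Eb /ee /ee1 /qq; apply/eqP.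
all: field; by rewrite hm ht. Qed.

Lemma exists_notin (f : nat -> rat) : injective f -> forall L : seq rat, exists n, f n \notin L.
Proof.
move=> fi L; set S := map f (iota 0 (size L).+1).
have uS : uniq S by rewrite map_inj_uniq // iota_uniq.
case/boolP: (all (mem L) S) => [/allP hall | /allPn [x /mapP [n _ ->] hn]].
  by have := uniq_leq_size uS hall; rewrite size_map size_iota ltnn.
by exists n.
Qed.

Lemma tinj (t1 t2 : rat) : 0 < t1 -> 0 < t2 -> t1 - 1/t1 = t2 - 1/t2 -> t1 = t2.
Proof.
move=> h1 h2 e.
have E : (t1 - t2) * (t1 * t2 + 1) = t1 * t2 * ((t1 - 1/t1) - (t2 - 1/t2)).
  by field; rewrite !gt_eqF.
move: E; rewrite e subrr mulr0 => /eqP; rewrite mulf_eq0 => /orP [/eqP|].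
  by move/eqP; rewrite subr_eq0 => /eqP.
by rewrite gt_eqF // addr_gt0 // mulr_gt0.
Qed.

Theorem mainTheorem5 :
  (forall m q : rat, m != 0 -> q != 0 -> q != - 1 / m ->
     on_curve (Ea m q) (Eb m q)
       (Aff ((1 / 3) * ((m ^+ 2 + 1) * q ^+ 2 + 2 * m * q + 2)) 0)
     /\ has_Z2 (Ea m q) (Eb m q)) /\
  (forall m : rat, m != 0 ->
     forall s : seq rat, exists q : rat,
       [/\ q \notin s, q != 0, q != - 1 / m & has_Z2xZ2 (Ea m q) (Eb m q)]).
Proof.
split.
  move=> m q _ _ _; split; first exact: e1_on.
  exists (Aff ((1 / 3) * ((m ^+ 2 + 1) * q ^+ 2 + 2 * m * q + 2)) 0); split => //.
    exact: e1_on.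
  by rewrite /= eqxx ?addr0 ?eqxx.
move=> m _ s.
have hm : m ^+ 2 + 1 != 0.
  by rewrite gt_eqF // ltr_wpDl // sqr_ge0.
have tpos : forall n : nat, 0 < (n.+1)%:R :> rat by move=> n; rewrite ltr0n.
have fi : injective (fun n : nat => qq m (n.+1)%:R).
  move=> n k /= e.
  have e2 : (n.+1)%:R - 1 / (n.+1)%:R - 2 * m = (k.+1)%:R - 1 / (k.+1)%:R - 2 * m :> rat.
    by move: e => /(congr1 (fun x => x * (m ^+ 2 + 1))); rewrite /qq !divfK.
  have e3 : (n.+1)%:R - 1 / (n.+1)%:R = (k.+1)%:R - 1 / (k.+1)%:R :> rat.
    by move/(congr1 (fun x => x + 2 * m)): e2; rewrite !subrK.
  have := tinj _ _ (tpos n) (tpos k) e3.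
  by move/eqP; rewrite eqr_nat => /eqP [].
have [n hn] := exists_notin _ fi (0 :: (-1/m) :: s).
set t : rat := (n.+1)%:R in hn.
have tp : 0 < t := tpos n. clearbody t.
set q := qq m t in hn *.
move: hn; rewrite !inE !negb_or => /and3P [hq0 hq1 hqs].
have ht : t != 0 by rewrite gt_eqF.
exists q; split => //.
have P_on : on_curve (Ea m q) (Eb m q) (Aff (ee1 m q) 0) by exact: e1_on.
have PP : padd (Ea m q) (Aff (ee1 m q) 0) (Aff (ee1 m q) 0) = Inf.
  by rewrite /= eqxx ?addr0 ?eqxx.
have QQ : forall x, padd (Ea m q) (Aff x 0) (Aff x 0) = Inf.
  by move=> x; rewrite /= eqxx ?addr0 ?eqxx.
have PQ : forall x, ee1 m q != x -> padd (Ea m q) (Aff (ee1 m q) 0) (Aff x 0) <> Inf.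
  by move=> x hx; rewrite /= (negbTE hx).
case/boolP: (ee1 m q == ee m t 1) => [/eqP h1 | h1].
  exists (Aff (ee1 m q) 0), (Aff (ee m t (-1)) 0); split => //.
  - by apply: (e23_on m t (-1)) => //; right.
  - split => //; apply: PQ; apply/eqP => h2.
    have : ee m t 1 - ee m t (-1) = q * (t + 1/t).
      by rewrite /ee /q; field.
    rewrite -h1 -h2 subrr => /esym /eqP; rewrite mulf_eq0 (negbTE hq0) /=.
    by rewrite gt_eqF // addr_gt0 // divr_gt0.

exists (Aff (ee1 m q) 0), (Aff (ee m t 1) 0); split => //.
- by apply: (e23_on m t 1) => //; left.
- by split => //; apply: PQ.
Qed.
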